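(* There is an absolute constant $C>0$ such that for every integer $n\ge 5$ with $n\equiv 1\pmod 4$ there is a dissection $D_n$ of the unit square $[0,1]^2$ into $n$ triangles with $\mathcal{R}(D_n)\le C/n^5$. Moreover $D_n$ can be taken of the following type: one triangle with vertices $(0,1),(1,1),(1,1-2/n)$ (area $1/n$), and the remaining region below the segment from $(0,1)$ to $(1,1-2/n)$ cut by $\tfrac{n-1}{4}$ vertical segments into trapezoidal slices (each with two vertical sides, bottom on the $x$-axis and top on that segment), each slice being divided into four triangles $T_1,T_2,T_3,T_4$ as follows: with the slice's bottom-left, bottom-right, top-right, top-left corners $A,B,Q,S$ and an extra point $M$ on the bottom side $AB$, $T_1=ASM$, $T_2=SM\,U$, $T_3=MUQ$, $T_4=MBQ$, where $U$ is an extra point on the top side $SQ$.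
   Context: A dissection of a polygon is a finite set of nondegenerate triangles with disjoint interiors whose union is the polygon. If its triangles have areas $a_1,\dots,a_n$, the range is $\mathcal{R}(D)=\max_{i,j}|a_i-a_j|$. *)

(* Defs.v *)
From Stdlib Require Import Reals Lra Lia List Permutation.
Import ListNotations.
Open Scope R_scope.

Definition point : Type := (R * R)%type.
Definition tri : Type := (point * point * point)%type.

Definition px (p : point) : R := fst p.
Definition py (p : point) : R := snd p.

Definition signed_area (T : tri) : R :=
  let '(a, b, c) := T in
  ((px b - px a) * (py c - py a) - (px c - px a) * (py b - py a)) / 2.
Definition area (T : tri) : R := Rabs (signed_area T).

Definition nondegenerate (T : tri) : Prop := signed_area T <> 0.

Definition in_triangle (T : tri) (p : point) : Prop :=
  let '(a, b, c) := T in
  exists l1 l2 l3 : R, 0 <= l1 /\ 0 <= l2 /\ 0 <= l3 /\ l1 + l2 + l3 = 1 /\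
    px p = l1 * px a + l2 * px b + l3 * px c /\
    py p = l1 * py a + l2 * py b + l3 * py c.

Definition in_interior (T : tri) (p : point) : Prop :=
  exists eps : R, 0 < eps /\
    forall q : point, (px q - px p) ^ 2 + (py q - py p) ^ 2 < eps ^ 2 ->
      in_triangle T q.

Definition in_unit_square (p : point) : Prop :=
  0 <= px p <= 1 /\ 0 <= py p <= 1.

Definition is_dissection_of_unit_square (D : list tri) : Prop :=
  (forall T, In T D -> nondegenerate T) /\
  (forall i j : nat, (i < length D)%nat -> (j < length D)%nat -> i <> j ->
     forall p : point,
       ~ (in_interior (nth i D ((0,0),(0,0),(0,0))) p /\
          in_interior (nth j D ((0,0),(0,0),(0,0))) p)) /\
  (forall p : point, in_unit_square p <-> exists T, In T D /\ in_triangle T p).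

Definition range (D : list tri) : R :=
  fold_right Rmax 0
    (map (fun T1 => fold_right Rmax 0
            (map (fun T2 => Rabs (area T1 - area T2)) D)) D).

Definition top_y (n : nat) (x : R) : R := 1 - 2 * x / INR n.

Definition top_triangle (n : nat) : tri :=
  ((0, 1), (1, 1), (1, 1 - 2 / INR n)).

Definition slice_triangles (n : nat) (a b m u : R) : list tri :=
  let A : point := (a, 0) in
  let B : point := (b, 0) in
  let Q : point := (b, top_y n b) in
  let S : point := (a, top_y n a) in
  let M : point := (m, 0) in
  let U : point := (u, top_y n u) in
  [ (A, S, M); (S, M, U); (M, U, Q); (M, B, Q) ].

Definition special_type (n : nat) (D : list tri) : Prop :=
  let k := ((n - 1) / 4)%nat in
  exists (x m u : nat -> R),
    x 0%nat = 0 /\ x k = 1 /\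
    (forall i : nat, (1 <= i <= k)%nat ->
       x (i - 1)%nat < x i /\
       x (i - 1)%nat <= m i <= x i /\
       x (i - 1)%nat <= u i <= x i) /\
    Permutation D
      (top_triangle n ::
         flat_map (fun i => slice_triangles n (x (i - 1)%nat) (x i) (m i) (u i))
                  (seq 1 k)).

(* Main.v *)
Require Import Defs.
From Stdlib Require Import Reals List.
From Stdlib Require Import Reals List Lra Lia Psatz Permutation.
Import ListNotations.
Open Scope R_scope.

Definition sa (a b c : point) : R := signed_area (a, b, c).

Lemma sa_eq (a b c : point) : sa a b c =
  ((px b - px a) * (py c - py a) - (px c - px a) * (py b - py a)) / 2.
Proof. reflexivity. Qed.

Lemma in_tri_gen (a b c p : point) : sa a b c <> 0 ->
  0 <= sa p b c / sa a b c -> 0 <= sa a p c / sa a b c -> 0 <= sa a b p / sa a b c ->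
  in_triangle (a, b, c) p.
Proof.
  intros H0 H1 H2 H3. simpl.
  exists (sa p b c / sa a b c), (sa a p c / sa a b c), (sa a b p / sa a b c).
  repeat split; auto.
  - rewrite !sa_eq in *. field; intro Hc; apply H0; lra.
  - rewrite !sa_eq in *. field; intro Hc; apply H0; lra.
  - rewrite !sa_eq in *. field; intro Hc; apply H0; lra.
Qed.

Lemma in_tri_pos (a b c p : point) : 0 < sa a b c ->
  0 <= sa p b c -> 0 <= sa a p c -> 0 <= sa a b p -> in_triangle (a, b, c) p.
Proof.
  intros. apply in_tri_gen; try lra; apply Rle_mult_inv_pos; lra.
Qed.

Lemma in_tri_neg (a b c p : point) : sa a b c < 0 ->
  sa p b c <= 0 -> sa a p c <= 0 -> sa a b p <= 0 -> in_triangle (a, b, c) p.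
Proof.
  intros. apply in_tri_gen; try lra;
  replace (sa p b c / sa a b c) with ((- sa p b c) / (- sa a b c)) by (field; lra);
  replace (sa a p c / sa a b c) with ((- sa a p c) / (- sa a b c)) by (field; lra);
  replace (sa a b p / sa a b c) with ((- sa a b p) / (- sa a b c)) by (field; lra);
  apply Rle_mult_inv_pos; lra.
Qed.

Definition lin (al be ga : R) (p : point) : R := al * px p + be * py p + ga.

Lemma tri_affine (al be ga : R) (a b c q : point) :
  in_triangle (a, b, c) q ->
  lin al be ga a <= 0 -> lin al be ga b <= 0 -> lin al be ga c <= 0 ->
  lin al be ga q <= 0.
Proof.
  simpl. intros [l1 [l2 [l3 [H1 [H2 [H3 [H4 [H5 H6]]]]]]]] Ha Hb Hc.
  assert (E : lin al be ga q = l1 * lin al be ga a + l2 * lin al be ga b + l3 * lin al be ga c).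
  { unfold lin. rewrite H5, H6.
    replace ga with (ga * (l1 + l2 + l3)) at 1 by (rewrite H4; ring). ring. }
  rewrite E. nra.
Qed.

Definition allv (P : point -> Prop) (T : tri) : Prop :=
  let '(a, b, c) := T in P a /\ P b /\ P c.

Definition sep (T T' : tri) : Prop :=
  exists al be ga, (al <> 0 \/ be <> 0) /\
    allv (fun p => lin al be ga p <= 0) T /\ allv (fun p => 0 <= lin al be ga p) T'.

Lemma sep_sym T T' : sep T T' -> sep T' T.
Proof.
  intros [al [be [ga [Hn [H1 H2]]]]]. exists (-al), (-be), (-ga).
  destruct T as [[a b] c], T' as [[a' b'] c']. simpl in *. unfold lin in *.
  split; [lra|]. split; lra.
Qed.

Lemma interior_neg al be ga T p : (al <> 0 \/ be <> 0) ->
  allv (fun p => lin al be ga p <= 0) T -> in_interior T p -> lin al be ga p < 0.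
Proof.
  intros Hn Hv [eps [He Hb]].
  set (Nn := al * al + be * be).
  assert (HN : 0 < Nn).
  { unfold Nn. destruct Hn as [H|H]; [assert (0 < al*al) by (apply Rsqr_pos_lt; exact H)
      | assert (0 < be*be) by (apply Rsqr_pos_lt; exact H)]; nra. }
  set (t := eps / (2 * (Nn + 1))).
  assert (Ht : 0 < t) by (unfold t; apply Rdiv_lt_0_compat; lra).
  assert (Ht2 : t * (2 * (Nn + 1)) = eps) by (unfold t; field; lra).
  set (q := (px p + t * al, py p + t * be) : point).
  assert (Hq : in_triangle T q).
  { apply Hb.
    assert (E: (px q - px p) ^ 2 + (py q - py p) ^ 2 = t*t*Nn) by (unfold q, Nn, px, py; simpl; ring).
    rewrite E.
    rewrite <- Ht2. assert (0 < t*t) by nra. assert (Nn < 4*((Nn+1)*(Nn+1))) by nra.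
    replace ((t * (2 * (Nn + 1))) ^ 2) with (t*t*(4*((Nn+1)*(Nn+1)))) by ring.
    apply Rmult_lt_compat_l; lra. }
  destruct T as [[a b] c]. simpl in Hv. destruct Hv as [Ha [Hb' Hc]].
  pose proof (tri_affine al be ga a b c q Hq Ha Hb' Hc) as Hl.
  unfold lin, q in Hl; simpl in Hl. unfold lin.
  assert (HH : lin al be ga p + t * Nn <= 0) by (unfold lin, Nn; nra).
  assert (0 < t*Nn) by nra. unfold lin in HH. lra.
Qed.

Lemma sep_disj T T' p : sep T T' -> ~ (in_interior T p /\ in_interior T' p).
Proof.
  intros Hs [H1 H2].
  destruct Hs as [al [be [ga [Hn [Hv1 Hv2]]]]].
  pose proof (interior_neg al be ga T p Hn Hv1 H1).
  assert (Hn' : -al <> 0 \/ -be <> 0) by lra.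
  assert (Hv2' : allv (fun p => lin (-al) (-be) (-ga) p <= 0) T').
  { destruct T' as [[a b] c]. simpl in *. unfold lin in *. lra. }
  pose proof (interior_neg (-al) (-be) (-ga) T' p Hn' Hv2' H2).
  unfold lin in *. lra.
Qed.

Lemma FOP_nth (R0 : tri -> tri -> Prop) (l : list tri) d :
  (forall x y, R0 x y -> R0 y x) -> ForallOrdPairs R0 l ->
  forall i j, (i < length l)%nat -> (j < length l)%nat -> i <> j ->
  R0 (nth i l d) (nth j l d).
Proof.
  intros Hs H. induction H as [|a l Hf Hl IH]; intros i j Hi Hj Hij; simpl in *.
  - lia.
  - rewrite Forall_forall in Hf.
    destruct i as [|i], j as [|j]; try lia.
    + apply Hf. apply nth_In. lia.
    + apply Hs, Hf. apply nth_In. lia.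
    + apply IH; lia.
Qed.

Lemma FOP_app (R0 : tri -> tri -> Prop) l1 l2 :
  ForallOrdPairs R0 l1 -> ForallOrdPairs R0 l2 ->
  (forall x y, In x l1 -> In y l2 -> R0 x y) -> ForallOrdPairs R0 (l1 ++ l2).
Proof.
  intros H1 H2 H. induction H1 as [|a l Hf Hl IH]; simpl; auto.
  constructor.
  - apply Forall_app. split; auto. rewrite Forall_forall. intros y Hy. apply H; simpl; auto.
  - apply IH. intros x y Hx Hy. apply H; simpl; auto.
Qed.

Lemma FOP_flat (R0 : tri -> tri -> Prop) (f : nat -> list tri) len : forall s,
  (forall i, (s <= i < s + len)%nat -> ForallOrdPairs R0 (f i)) ->
  (forall i j x y, (s <= i)%nat -> (i < j)%nat -> (j < s + len)%nat -> In x (f i) -> In y (f j) -> R0 x y) ->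
  ForallOrdPairs R0 (flat_map f (seq s len)).
Proof.
  induction len as [|len IH]; intros s H1 H2; simpl. constructor.
  apply FOP_app.
  - apply H1; lia.
  - apply IH; [intros i Hi; apply H1; lia | intros i j x y Hi Hij Hj Hx Hy; apply (H2 i j x y); auto; lia].
  - intros x y Hx Hy. apply in_flat_map in Hy. destruct Hy as [j [Hj Hy]].
    apply in_seq in Hj. apply (H2 s j x y); auto; lia.
Qed.

Lemma fold_max_le (l : list R) M : 0 <= M -> (forall x, In x l -> x <= M) -> fold_right Rmax 0 l <= M.
Proof.
  induction l as [|a l IH]; simpl; intros H0 H; auto.
  apply Rmax_lub; auto.
Qed.

Lemma range_le (D : list tri) c dl : 0 <= dl -> (forall T, In T D -> Rabs (area T - c) <= dl) ->
  range D <= 2 * dl.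
Proof.
  intros H0 H. unfold range. apply fold_max_le; [lra|].
  intros x Hx. apply in_map_iff in Hx. destruct Hx as [T1 [<- HT1]].
  apply fold_max_le; [lra|].
  intros y Hy. apply in_map_iff in Hy. destruct Hy as [T2 [<- HT2]].
  pose proof (H T1 HT1). pose proof (H T2 HT2).
  pose proof (Rle_abs (area T1 - c)). pose proof (Rle_abs (-(area T1 - c))).
  pose proof (Rle_abs (area T2 - c)). pose proof (Rle_abs (-(area T2 - c))).
  rewrite Rabs_Ropp in *. apply Rabs_le. lra.
Qed.

Lemma sa_cyc a b c : sa a b c = sa b c a.
Proof. rewrite !sa_eq. field. Qed.

Lemma sep_line (X Y : point) T T' : (px X <> px Y \/ py X <> py Y) ->
  allv (fun p => sa X Y p <= 0) T -> allv (fun p => 0 <= sa X Y p) T' -> sep T T'.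
Proof.
  intros Hn H1 H2.
  exists (-(py Y - py X)/2), ((px Y - px X)/2),
    ((-(px Y - px X) * py X + px X * (py Y - py X))/2).
  assert (E : forall p, lin (-(py Y - py X)/2) ((px Y - px X)/2)
    ((-(px Y - px X) * py X + px X * (py Y - py X))/2) p = sa X Y p).
  { intros p. unfold lin. rewrite sa_eq. field. }
  split; [lra|].
  destruct T as [[a b] c], T' as [[a' b'] c']. simpl in *. rewrite !E. tauto.
Qed.

Definition in_sq_v (T : tri) := allv in_unit_square T.

Lemma tri_in_square T q : in_sq_v T -> in_triangle T q -> in_unit_square q.
Proof.
  destruct T as [[a b] c]. unfold in_sq_v, in_unit_square. simpl.
  intros [[[Ha1 Ha2] [Ha3 Ha4]] [[[Hb1 Hb2] [Hb3 Hb4]] [[Hc1 Hc2] [Hc3 Hc4]]]] Hq.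
  pose proof (tri_affine (-1) 0 0 a b c q Hq) as T1.
  pose proof (tri_affine 1 0 (-1) a b c q Hq) as T2.
  pose proof (tri_affine 0 (-1) 0 a b c q Hq) as T3.
  pose proof (tri_affine 0 1 (-1) a b c q Hq) as T4.
  unfold lin in *. repeat split.
  - enough (-1 * px q + 0 * py q + 0 <= 0) by lra. apply T1; lra.
  - enough (1 * px q + 0 * py q + -1 <= 0) by lra. apply T2; lra.
  - enough (0 * px q + -1 * py q + 0 <= 0) by lra. apply T3; lra.
  - enough (0 * px q + 1 * py q + -1 <= 0) by lra. apply T4; lra.
Qed.

Section Slice.
Variable n : nat.
Variables a b m u : R.
Hypothesis Hn : 5 <= INR n.
Hypothesis Ha : 0 <= a.
Hypothesis Ham : a < m.
Hypothesis Hmb : m < b.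
Hypothesis Hb : b <= 1.
Hypothesis Hau : a < u.
Hypothesis Hub : u < b.

Local Notation h := (top_y n).
Local Notation A := ((a, 0) : point).
Local Notation B := ((b, 0) : point).
Local Notation Q := ((b, top_y n b) : point).
Local Notation S := ((a, top_y n a) : point).
Local Notation M := ((m, 0) : point).
Local Notation U := ((u, top_y n u) : point).

Lemma h_pos x : 0 <= x -> x <= 1 -> 0 < h x.
Proof.
  intros Hx0 Hx. unfold top_y.
  assert (2 * x / INR n <= 2 / 5).
  { unfold Rdiv. apply Rle_trans with (2 * x * / 5).
    - apply Rmult_le_compat_l; [lra|]. apply Rinv_le_contravar; lra.
    - lra. }
  lra.
Qed.

Lemma h_le1 x : 0 <= x -> h x <= 1.
Proof.
  intros Hx. unfold top_y.
  assert (0 <= 2 * x / INR n) by (apply Rle_mult_inv_pos; lra). lra.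
Qed.

Ltac sgn e := unfold sa, signed_area, top_y, px, py; simpl; field_simplify; try lra.

Lemma E_ASM : sa A S M = -((m - a) * h a) / 2.
Proof. unfold sa, signed_area, px, py; simpl. field. all: try (apply Rgt_not_eq; lra). Qed.
Lemma E_SMU : sa S M U = (u - a) * h m / 2.
Proof. unfold sa, signed_area, top_y, px, py; simpl. field. all: try (apply Rgt_not_eq; lra). Qed.
Lemma E_MUQ : sa M U Q = -((b - u) * h m) / 2.
Proof. unfold sa, signed_area, top_y, px, py; simpl. field. all: try (apply Rgt_not_eq; lra). Qed.
Lemma E_MBQ : sa M B Q = (b - m) * h b / 2.
Proof. unfold sa, signed_area, top_y, px, py; simpl. field. all: try (apply Rgt_not_eq; lra). Qed.
Lemma E_SMQ : sa S M Q = (b - a) * h m / 2.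
Proof. unfold sa, signed_area, top_y, px, py; simpl. field. all: try (apply Rgt_not_eq; lra). Qed.
Lemma E_SMB : sa S M B = (b - m) * h a / 2.
Proof. unfold sa, signed_area, top_y, px, py; simpl. field. all: try (apply Rgt_not_eq; lra). Qed.
Lemma E_MQU : sa M Q U = (b - u) * h m / 2.
Proof. unfold sa, signed_area, top_y, px, py; simpl. field. all: try (apply Rgt_not_eq; lra). Qed.


Lemma hm_pos : 0 < h m. Proof. apply h_pos; lra. Qed.
Lemma ha_pos : 0 < h a. Proof. apply h_pos; lra. Qed.
Lemma hb_pos : 0 < h b. Proof. apply h_pos; lra. Qed.
Lemma hu_pos : 0 < h u. Proof. apply h_pos; lra. Qed.

Lemma slice_eq : slice_triangles n a b m u = [(A, S, M); (S, M, U); (M, U, Q); (M, B, Q)].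
Proof. reflexivity. Qed.

Lemma slice_nondeg T : In T (slice_triangles n a b m u) -> nondegenerate T.
Proof.
  pose proof hm_pos; pose proof ha_pos; pose proof hb_pos.
  rewrite slice_eq. unfold nondegenerate. fold sa.
  intros [<-|[<-|[<-|[<-|[]]]]]; fold (sa A S M) (sa S M U) (sa M U Q) (sa M B Q).
  - rewrite E_ASM. apply Rlt_not_eq. nra.
  - rewrite E_SMU. apply Rgt_not_eq. nra.
  - rewrite E_MUQ. apply Rlt_not_eq. nra.
  - rewrite E_MBQ. apply Rgt_not_eq. nra.
Qed.

Lemma sa_same X Y : sa X Y X = 0.
Proof. rewrite sa_eq. field. Qed.
Lemma sa_same2 X Y : sa X Y Y = 0.
Proof. rewrite sa_eq. field. Qed.

Lemma slice_FOP : ForallOrdPairs sep (slice_triangles n a b m u).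
Proof.
  pose proof hm_pos; pose proof ha_pos; pose proof hb_pos.
  assert (HSM : px S <> px M \/ py S <> py M) by (left; simpl; lra).
  assert (HMU : px M <> px U \/ py M <> py U) by (right; simpl; pose proof hu_pos; lra).
  assert (HMQ : px M <> px Q \/ py M <> py Q) by (left; simpl; lra).
  assert (SA : sa S M A <= 0) by (rewrite sa_cyc, sa_cyc, E_ASM; nra).
  assert (SU : 0 <= sa S M U) by (rewrite E_SMU; nra).
  assert (SQ : 0 <= sa S M Q) by (rewrite E_SMQ; nra).
  assert (SB : 0 <= sa S M B) by (rewrite E_SMB; nra).
  assert (US : 0 <= sa M U S) by (rewrite (sa_cyc M U S), (sa_cyc U S M), E_SMU; nra).
  assert (UQ : sa M U Q <= 0) by (rewrite E_MUQ; nra).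
  assert (QS : 0 <= sa M Q S) by (rewrite (sa_cyc M Q S), (sa_cyc Q S M), E_SMQ; nra).
  assert (QU : 0 <= sa M Q U) by (rewrite E_MQU; nra).
  assert (QB : sa M Q B <= 0) by (unfold sa, signed_area, px, py; simpl; nra).
  rewrite slice_eq.
  repeat constructor; simpl.
  - apply (sep_line S M); auto; simpl; rewrite ?sa_same, ?sa_same2; repeat split; lra.
  - apply (sep_line S M); auto; simpl; rewrite ?sa_same, ?sa_same2; repeat split; lra.
  - apply (sep_line S M); auto; simpl; rewrite ?sa_same, ?sa_same2; repeat split; lra.
  - apply sep_sym, (sep_line M U); auto; simpl; rewrite ?sa_same, ?sa_same2; repeat split; lra.
  - apply sep_sym, (sep_line M Q); auto; simpl; rewrite ?sa_same, ?sa_same2; repeat split; lra.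
  - apply sep_sym, (sep_line M Q); auto; simpl; rewrite ?sa_same, ?sa_same2; repeat split; lra.
Qed.


Lemma h_le1' x : 0 <= x -> top_y n x <= 1.
Proof. apply h_le1. Qed.

Lemma slice_sq T : In T (slice_triangles n a b m u) -> in_sq_v T.
Proof.
  pose proof (h_pos a) as P1; pose proof (h_pos b) as P2;
  pose proof (h_pos m) as P3; pose proof (h_pos u) as P4;
  pose proof (h_le1 a) as Q1; pose proof (h_le1 b) as Q2;
  pose proof (h_le1 m) as Q3; pose proof (h_le1 u) as Q4.
  rewrite slice_eq. unfold in_sq_v, in_unit_square.
  intros [<-|[<-|[<-|[<-|[]]]]]; simpl; repeat split;
  first [lra | apply Rlt_le; (apply P1 || apply P2 || apply P3 || apply P4); lra
        | (apply Q1 || apply Q2 || apply Q3 || apply Q4); lra].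
Qed.

Lemma slice_xr T : In T (slice_triangles n a b m u) -> allv (fun p => a <= px p <= b) T.
Proof.
  rewrite slice_eq. intros [<-|[<-|[<-|[<-|[]]]]]; simpl; lra.
Qed.

Lemma slice_top T : In T (slice_triangles n a b m u) ->
  allv (fun p => lin (2 / INR n) 1 (-1) p <= 0) T.
Proof.
  assert (K : forall x, x <= 1 -> lin (2 / INR n) 1 (-1) (x, 0) <= 0).
  { intros x Hx. unfold lin, px, py; simpl.
    assert (2 / INR n * x <= 2 / INR n * 1).
    { apply Rmult_le_compat_l; [|lra]. apply Rlt_le, Rdiv_lt_0_compat; lra. }
    assert (2 / INR n * 1 <= 1).
    { unfold Rdiv. rewrite Rmult_1_r. apply Rle_trans with (2 * / 5).
      - apply Rmult_le_compat_l; [lra|]. apply Rinv_le_contravar; lra.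
      - lra. }
    lra. }
  assert (K2 : forall x, lin (2 / INR n) 1 (-1) (x, top_y n x) <= 0).
  { intros x. unfold lin, top_y, px, py; simpl. apply Req_le. field. lra. }
  rewrite slice_eq. intros [<-|[<-|[<-|[<-|[]]]]]; simpl; repeat split;
  first [apply K; lra | apply K2].
Qed.

Lemma slice_cover p : a <= px p <= b -> 0 <= py p <= top_y n (px p) ->
  exists T, In T (slice_triangles n a b m u) /\ in_triangle T p.
Proof.
  pose proof hm_pos; pose proof ha_pos; pose proof hb_pos.
  destruct p as [x y]. simpl. intros Hx Hy.
  destruct (Rle_lt_dec (sa S M (x, y)) 0) as [C1|C1].
  { exists (A, S, M). split; [repeat (first [left; reflexivity | right]) |].
    apply in_tri_neg.
    - rewrite E_ASM. nra.
    - rewrite sa_cyc. exact C1.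
    - unfold sa, signed_area, px, py; simpl. nra.
    - unfold sa, signed_area, px, py; simpl. nra. }
  destruct (Rle_lt_dec 0 (sa M (x, y) Q)) as [C2|C2].
  { exists (M, B, Q). split; [repeat (first [left; reflexivity | right]) |].
    apply in_tri_pos.
    - rewrite E_MBQ. nra.
    - unfold sa, signed_area, px, py; simpl. nra.
    - exact C2.
    - unfold sa, signed_area, px, py; simpl. nra. }
  destruct (Rle_lt_dec 0 (sa M U (x, y))) as [C3|C3].
  { exists (S, M, U). split; [repeat (first [left; reflexivity | right]) |].
    apply in_tri_pos.
    - rewrite E_SMU. nra.
    - rewrite sa_cyc. exact C3.
    - assert (E : sa S (x, y) U = (u - a) * (top_y n x - y) / 2)
        by (unfold sa, signed_area, top_y, px, py; simpl; field; lra).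
      rewrite E. nra.
    - lra. }
  { exists (M, U, Q). split; [repeat (first [left; reflexivity | right]) |].
    apply in_tri_neg.
    - rewrite E_MUQ. nra.
    - assert (E : sa (x, y) U Q = (b - u) * (y - top_y n x) / 2)
        by (unfold sa, signed_area, top_y, px, py; simpl; field; lra).
      rewrite E. nra.
    - lra.
    - lra. }
Qed.

End Slice.

Definition mm n a := a + 2 / (INR n * top_y n a).
Definition uu n a := a + 2 / (INR n * top_y n (mm n a)).

Section Area.
Variable n : nat.
Variables a b : R.
Hypothesis Hn : 5 <= INR n.
Hypothesis Ha : 0 <= a.
Hypothesis Hab : a < b.
Hypothesis Hb : b <= 1.
Hypothesis Hc : (b - a) * (1 - (a + b) / INR n) = 4 / INR n.

Local Notation N := (INR n).

Lemma ha_ge : 3/5 <= top_y n a.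
Proof.
  unfold top_y. assert (2 * a / N <= 2/5).
  { unfold Rdiv. apply Rle_trans with (2 * 1 * / 5); [|lra].
    apply Rmult_le_compat; try lra. apply Rlt_le, Rinv_0_lt_compat; lra.
    apply Rinv_le_contravar; lra. }
  lra.
Qed.

Lemma w_le : (b - a) * N <= 20/3.
Proof.
  assert (H1 : (a + b) / N <= 2/5).
  { unfold Rdiv. apply Rle_trans with (2 * / 5); [|lra].
    apply Rmult_le_compat; try lra. apply Rlt_le, Rinv_0_lt_compat; lra.
    apply Rinv_le_contravar; lra. }
  assert (H2 : (b - a) * (1 - (a + b) / N) * N = 4) by (rewrite Hc; field; lra).
  nra.
Qed.

Lemma key : N * top_y n a * (b - a) = 4 + (b - a) ^ 2.
Proof.
  assert (H2 : (b - a) * (1 - (a + b) / N) * N = 4) by (rewrite Hc; field; lra).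
  unfold top_y. rewrite <- H2. field. lra.
Qed.


Lemma hm_eq : top_y n (mm n a) = top_y n a - 4 / (N * N * top_y n a).
Proof. pose proof ha_ge. unfold mm, top_y in *. field. split; lra. Qed.

Lemma m_prop : a < mm n a < b.
Proof.
  pose proof ha_ge as H1. pose proof key as K.
  assert (P : 0 < N * top_y n a) by nra.
  unfold mm. split.
  - assert (0 < 2 / (N * top_y n a)) by (apply Rdiv_lt_0_compat; lra). lra.
  - assert (2 / (N * top_y n a) < b - a); [|lra].
    apply (Rmult_lt_reg_l (N * top_y n a)); auto.
    replace (N * top_y n a * (2 / (N * top_y n a))) with 2 by (field; lra).
    nra.
Qed.

Lemma hm_pos2 : 0 < top_y n (mm n a).
Proof.
  pose proof m_prop. unfold top_y.
  assert (2 * mm n a / N <= 2/5); [|lra].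
  unfold Rdiv. apply Rle_trans with (2 * 1 * / 5); [|lra].
  apply Rmult_le_compat; try lra. apply Rlt_le, Rinv_0_lt_compat; lra.
  apply Rinv_le_contravar; lra.
Qed.

Lemma u_prop : a < uu n a < b.
Proof.
  pose proof ha_ge as H1. pose proof key as K. pose proof hm_pos2 as H2.
  pose proof w_le as W.
  assert (P : 0 < N * top_y n (mm n a)) by nra.
  unfold uu. split.
  - assert (0 < 2 / (N * top_y n (mm n a))) by (apply Rdiv_lt_0_compat; lra). lra.
  - assert (2 / (N * top_y n (mm n a)) < b - a); [|lra].
    apply (Rmult_lt_reg_l (N * top_y n (mm n a))); auto.
    replace (N * top_y n (mm n a) * (2 / (N * top_y n (mm n a)))) with 2 by (field; lra).
    assert (E : N * top_y n (mm n a) * (b - a) = 4 + (b-a)^2 - 4 * ((b - a) * N) / (N * N * top_y n a)).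
    { rewrite hm_eq, <- K. field. split; lra. }
    rewrite E.
    assert (4 * ((b - a) * N) / (N * N * top_y n a) <= 16/9); [|nra].
    assert (0 < N * N * top_y n a) by nra.
    apply (Rmult_le_reg_r (N * N * top_y n a)); auto.
    unfold Rdiv. rewrite Rmult_assoc, Rinv_l by lra. rewrite Rmult_1_r.
    assert (25 * (3/5) <= N * N * top_y n a).
    { apply Rmult_le_compat; try lra. nra. }
    nra.
Qed.

Lemma err_bound : (b - a) ^ 3 / (2 * N ^ 2 * top_y n a) <= 250 / N ^ 5.
Proof.
  pose proof ha_ge as H1. pose proof w_le as W.
  set (v := (b - a) * N).
  assert (Hv : 0 < v) by (unfold v; nra).
  assert (E : 250 / N ^ 5 - (b - a) ^ 3 / (2 * N ^ 2 * top_y n a)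
     = (500 * top_y n a - v ^ 3) / (2 * top_y n a * N ^ 5)).
  { unfold v. field. split; lra. }
  assert (0 <= (500 * top_y n a - v ^ 3) / (2 * top_y n a * N ^ 5)); [|lra].
  apply Rle_mult_inv_pos.
  - assert (v ^ 3 <= (20/3) ^ 3) by (apply pow_incr; split; [lra|unfold v; lra]).
    assert ((20/3)^3 = 8000/27) by field. lra.
  - assert (0 < N ^ 5) by (apply pow_lt; lra). nra.
Qed.

Lemma slice_area_ok T : In T (slice_triangles n a b (mm n a) (uu n a)) ->
  Rabs (area T - 1 / N) <= 250 / N ^ 5.
Proof.
  pose proof ha_ge as H1. pose proof key as K. pose proof hm_pos2 as H2.
  pose proof m_prop as Mp. pose proof u_prop as Up. pose proof err_bound as EB.
  assert (Hw3 : 0 <= (b - a) ^ 3 / (2 * N ^ 2 * top_y n a)).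
  { apply Rle_mult_inv_pos. apply pow_le; lra. assert (0 < N^2) by nra. nra. }
  set (K' := N * top_y n a * (b - a) - 4 - (b - a) ^ 2).
  assert (K0 : K' = 0) by (unfold K'; lra).
  unfold slice_triangles. intros [<-|[<-|[<-|[<-|[]]]]]; unfold area;
  match goal with |- context [signed_area (?x, ?y, ?z)] => change (signed_area (x,y,z)) with (sa x y z) end.
  - rewrite E_ASM by lra. unfold mm at 1.
    replace (- ((a + 2 / (N * top_y n a) - a) * top_y n a) / 2) with (- (1 / N)) by (field; lra).
    rewrite Rabs_Ropp, (Rabs_pos_eq (1/N)) by (apply Rlt_le, Rdiv_lt_0_compat; lra).
    unfold Rminus. rewrite Rplus_opp_r, Rabs_R0. apply Rle_mult_inv_pos; [lra|]. apply pow_lt; lra.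
  - rewrite E_SMU by lra. unfold uu at 1.
    replace ((a + 2 / (N * top_y n (mm n a)) - a) * top_y n (mm n a) / 2) with (1 / N) by (field; lra).
    rewrite (Rabs_pos_eq (1/N)) by (apply Rlt_le, Rdiv_lt_0_compat; lra).
    unfold Rminus. rewrite Rplus_opp_r, Rabs_R0. apply Rle_mult_inv_pos; [lra|]. apply pow_lt; lra.
  - rewrite E_MUQ by lra.
    assert (E : - ((b - uu n a) * top_y n (mm n a)) / 2 - 0 = - (1 / N + (b - a) ^ 3 / (2 * N ^ 2 * top_y n a))).
    { assert (E2 : 2 * N ^ 2 * top_y n a * ((b - uu n a) * top_y n (mm n a) / 2 - 1 / N) - (b - a) ^ 3
                   = K' * ((b - a) + N * top_y n a)).
      { assert (Eq: top_y n a * (N*N*top_y n a) - 4 = N*N*top_y n a * top_y n (mm n a))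
          by (rewrite hm_eq; field; split; lra).
        assert (0 < N*N*top_y n a) by nra.
        unfold K', uu. rewrite hm_eq. field. split; [lra|]. split; [lra|].
        rewrite Eq. nra. }
      rewrite K0, Rmult_0_l in E2.
      assert (E3 : (b - uu n a) * top_y n (mm n a) / 2 - 1 / N = (b - a) ^ 3 / (2 * N ^ 2 * top_y n a)).
      { apply (Rmult_eq_reg_l (2 * N ^ 2 * top_y n a)). 2: { assert (0 < N^2) by nra. nra. }
        replace (2 * N ^ 2 * top_y n a * ((b - a) ^ 3 / (2 * N ^ 2 * top_y n a))) with ((b-a)^3)
          by (field; lra). lra. }
      lra. }
    replace (- ((b - uu n a) * top_y n (mm n a)) / 2) with (- (1 / N + (b - a) ^ 3 / (2 * N ^ 2 * top_y n a))) by lra.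
    rewrite Rabs_Ropp. rewrite (Rabs_pos_eq (1 / N + _)).
    + replace (1 / N + (b - a) ^ 3 / (2 * N ^ 2 * top_y n a) - 1 / N) with ((b - a) ^ 3 / (2 * N ^ 2 * top_y n a)) by ring.
      rewrite Rabs_pos_eq; [clear - EB; lra | assert (0 < 1/N) by (apply Rdiv_lt_0_compat; lra); lra].
    + assert (0 < 1/N) by (apply Rdiv_lt_0_compat; lra). lra.
  - rewrite E_MBQ by lra.
    assert (E2 : 2 * N ^ 2 * top_y n a * ((b - mm n a) * top_y n b / 2 - 1 / N) + (b - a) ^ 3
                   = K' * (N * top_y n a - (b - a))).
    { unfold K', mm, top_y. field. lra. }
    rewrite K0, Rmult_0_l in E2.
    assert (E3 : (b - mm n a) * top_y n b / 2 - 1 / N = - ((b - a) ^ 3 / (2 * N ^ 2 * top_y n a))).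
    { apply (Rmult_eq_reg_l (2 * N ^ 2 * top_y n a)). 2: { assert (0 < N^2) by nra. nra. }
      replace (2 * N ^ 2 * top_y n a * - ((b - a) ^ 3 / (2 * N ^ 2 * top_y n a))) with (- (b-a)^3)
        by (field; lra). lra. }
    assert (Hhb : 0 < top_y n b) by (apply h_pos; lra).
    assert (Hbm : 0 < b - mm n a) by lra.
    rewrite (Rabs_pos_eq ((b - mm n a) * top_y n b / 2)) by (apply Rlt_le, Rdiv_lt_0_compat; [nra|lra]).
    rewrite E3. rewrite Rabs_Ropp, Rabs_pos_eq; lra.
Qed.

End Area.

Section Top.
Variable n : nat.
Hypothesis Hn : 5 <= INR n.
Local Notation N := (INR n).

Lemma top_sa : sa (0, 1) (1, 1) (1, 1 - 2 / N) = - (1 / N).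
Proof. unfold sa, signed_area, px, py; simpl. field. lra. Qed.

Lemma top_nondeg : nondegenerate (top_triangle n).
Proof.
  unfold nondegenerate, top_triangle. change (sa (0, 1) (1, 1) (1, 1 - 2 / N) <> 0).
  rewrite top_sa. assert (0 < 1 / N) by (apply Rdiv_lt_0_compat; lra). lra.
Qed.

Lemma top_area : Rabs (area (top_triangle n) - 1 / N) <= 250 / N ^ 5.
Proof.
  unfold area, top_triangle. change (signed_area ((0, 1), (1, 1), (1, 1 - 2 / N))) with (sa (0, 1) (1, 1) (1, 1 - 2 / N)).
  rewrite top_sa, Rabs_Ropp, (Rabs_pos_eq (1/N)) by (apply Rlt_le, Rdiv_lt_0_compat; lra).
  unfold Rminus. rewrite Rplus_opp_r, Rabs_R0. apply Rle_mult_inv_pos; [lra|]. apply pow_lt; lra.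
Qed.

Lemma top_sq : in_sq_v (top_triangle n).
Proof.
  unfold in_sq_v, top_triangle, in_unit_square. simpl.
  assert (0 < 2 / N <= 2/5).
  { split. apply Rdiv_lt_0_compat; lra. unfold Rdiv. apply Rmult_le_compat_l; [lra|].
    apply Rinv_le_contravar; lra. }
  repeat split; lra.
Qed.

Lemma top_vals : allv (fun p => 0 <= lin (2 / N) 1 (-1) p) (top_triangle n).
Proof.
  unfold top_triangle, lin; simpl.
  assert (0 < 2 / N) by (apply Rdiv_lt_0_compat; lra).
  repeat split; try lra; apply Req_le; field; lra.
Qed.

Lemma top_cover p : in_unit_square p -> top_y n (px p) <= py p -> in_triangle (top_triangle n) p.
Proof.
  destruct p as [x y]. unfold in_unit_square, top_triangle. intros [[H1 H2] [H3 H4]] H.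
  unfold px, py in *; simpl in H1, H2, H3, H4, H.
  assert (0 < / N) by (apply Rinv_0_lt_compat; lra).
  apply in_tri_neg.
  - rewrite top_sa. assert (0 < 1 / N) by (apply Rdiv_lt_0_compat; lra). lra.
  - replace (sa (x, y) (1, 1) (1, 1 - 2 / N)) with (- ((1 - x) * / N)) by (unfold sa, signed_area, px, py; simpl; field; lra).
    nra.
  - replace (sa (0, 1) (x, y) (1, 1 - 2 / N)) with ((top_y n x - y) / 2) by (unfold sa, signed_area, top_y, px, py; simpl; field; lra).
    lra.
  - replace (sa (0, 1) (1, 1) (x, y)) with ((y - 1) / 2) by (unfold sa, signed_area, px, py; simpl; field).
    lra.
Qed.
End Top.

Definition xs (n i : nat) : R := (INR n - sqrt (INR n ^ 2 - 16 * INR i)) / 2.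

Section Seq.
Variable n k : nat.
Hypothesis Hnk : n = (4 * k + 1)%nat.
Hypothesis Hk : (1 <= k)%nat.

Lemma N_eq : INR n = 4 * INR k + 1.
Proof. rewrite Hnk, plus_INR, mult_INR. simpl. lra. Qed.

Lemma Nge5 : 5 <= INR n.
Proof. rewrite N_eq. apply le_INR in Hk. simpl in Hk. lra. Qed.

Lemma disc_nonneg i : (i <= k)%nat -> 0 <= INR n ^ 2 - 16 * INR i.
Proof.
  intros Hi. apply le_INR in Hi. rewrite N_eq. pose proof (pow2_ge_0 (4 * INR k - 1)). nra.
Qed.

Lemma xs_F i : (i <= k)%nat -> xs n i - xs n i ^ 2 / INR n = 4 * INR i / INR n.
Proof.
  intros Hi. pose proof (disc_nonneg i Hi). pose proof Nge5.
  unfold xs. set (s := sqrt (INR n ^ 2 - 16 * INR i)).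
  assert (Hs : s * s = INR n ^ 2 - 16 * INR i) by (apply sqrt_sqrt; auto).
  replace (INR i) with ((INR n ^ 2 - s * s) / 16) by lra.
  field. lra.
Qed.

Lemma xs_0 : xs n 0 = 0.
Proof.
  unfold xs. simpl INR. pose proof Nge5.
  replace (INR n ^ 2 - 16 * 0) with (INR n ^ 2) by ring.
  rewrite sqrt_pow2 by lra. lra.
Qed.

Lemma xs_k : xs n k = 1.
Proof.
  unfold xs. pose proof Nge5. pose proof N_eq.
  replace (INR n ^ 2 - 16 * INR k) with ((INR n - 2) ^ 2) by (rewrite H0; ring).
  rewrite sqrt_pow2 by lra. lra.
Qed.

Lemma xs_mono i j : (i <= j)%nat -> (j <= k)%nat -> xs n i <= xs n j.
Proof.
  intros Hij Hj. unfold xs. pose proof (disc_nonneg j Hj).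
  apply le_INR in Hij.
  assert (sqrt (INR n ^ 2 - 16 * INR j) <= sqrt (INR n ^ 2 - 16 * INR i)) by (apply sqrt_le_1_alt; lra).
  lra.
Qed.

Lemma xs_smono i : (1 <= i)%nat -> (i <= k)%nat -> xs n (i - 1) < xs n i.
Proof.
  intros H1 Hi. unfold xs. pose proof (disc_nonneg i Hi).
  assert (E : INR (i - 1) = INR i - 1) by (rewrite minus_INR by lia; simpl; lra).
  rewrite E.
  assert (sqrt (INR n ^ 2 - 16 * INR i) < sqrt (INR n ^ 2 - 16 * (INR i - 1))) by (apply sqrt_lt_1_alt; lra).
  lra.
Qed.

Lemma xs_range i : (i <= k)%nat -> 0 <= xs n i <= 1.
Proof.
  intros Hi. rewrite <- xs_0, <- xs_k. split; apply xs_mono; lia.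
Qed.

Lemma xs_slice i : (1 <= i)%nat -> (i <= k)%nat ->
  (xs n i - xs n (i - 1)) * (1 - (xs n (i - 1) + xs n i) / INR n) = 4 / INR n.
Proof.
  intros H1 Hi. pose proof Nge5.
  pose proof (xs_F i Hi) as F1. pose proof (xs_F (i - 1) ltac:(lia)) as F2.
  assert (E : INR (i - 1) = INR i - 1) by (rewrite minus_INR by lia; simpl; lra).
  rewrite E in F2.
  assert (G : (xs n i - xs n (i - 1)) * (1 - (xs n (i - 1) + xs n i) / INR n)
     = (xs n i - xs n i ^ 2 / INR n) - (xs n (i - 1) - xs n (i - 1) ^ 2 / INR n)) by (field; lra).
  rewrite G, F1, F2. field. lra.
Qed.

End Seq.

Definition sl n i := slice_triangles n (xs n (i-1)) (xs n i) (mm n (xs n (i-1))) (uu n (xs n (i-1))).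
Definition Dn n := top_triangle n :: flat_map (sl n) (seq 1 ((n-1)/4)).

Lemma len_flat n k : forall s, length (flat_map (sl n) (seq s k)) = (4 * k)%nat.
Proof.
  induction k as [|k IH]; intros s; simpl; auto.
  rewrite IH. lia.
Qed.

Lemma find_slice (x : nat -> R) (t : R) k : forall (Hk : (1 <= k)%nat), x 0%nat <= t <= x k ->
  exists i, (1 <= i <= k)%nat /\ x (i - 1)%nat <= t <= x i.
Proof.
  induction k as [|k IH]; intros Hk Ht; [lia|].
  destruct (Nat.eq_dec k 0) as [->|Hk0].
  - exists 1%nat. simpl. split; [lia|lra].
  - destruct (Rle_lt_dec t (x k)) as [Hl|Hl].
    + destruct (IH ltac:(lia) ltac:(lra)) as [i [Hi Hi2]]. exists i. split; [lia|auto].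
    + exists (S k). split; [lia|]. replace (S k - 1)%nat with k by lia. lra.
Qed.

Section Main.
Variable n k : nat.
Hypothesis Hnk : n = (4 * k + 1)%nat.
Hypothesis Hk : (1 <= k)%nat.
Hypothesis Hkd : k = ((n - 1) / 4)%nat.

Lemma sh i : (1 <= i <= k)%nat ->
  let a := xs n (i - 1) in let b := xs n i in
  5 <= INR n /\ 0 <= a /\ a < mm n a < b /\ b <= 1 /\ a < uu n a < b /\
  (b - a) * (1 - (a + b) / INR n) = 4 / INR n.
Proof.
  intros Hi a b.
  pose proof (Nge5 n k Hnk Hk) as H5.
  pose proof (xs_range n k Hnk Hk (i - 1) ltac:(lia)) as R1.
  pose proof (xs_range n k Hnk Hk i ltac:(lia)) as R2.
  pose proof (xs_smono n k Hnk Hk i ltac:(lia) ltac:(lia)) as S1.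
  pose proof (xs_slice n k Hnk Hk i ltac:(lia) ltac:(lia)) as S2.
  fold a b in R1, R2, S1, S2.
  pose proof (m_prop n a b H5 ltac:(lra) S1 ltac:(lra) S2).
  pose proof (u_prop n a b H5 ltac:(lra) S1 ltac:(lra) S2).
  repeat split; try lra.
Qed.

Lemma inD T : In T (flat_map (sl n) (seq 1 ((n-1)/4))) -> exists i, (1 <= i <= k)%nat /\ In T (sl n i).
Proof.
  intros H. apply in_flat_map in H. destruct H as [i [Hi HT]]. apply in_seq in Hi.
  exists i. split; [lia|auto].
Qed.

Lemma D_sep : ForallOrdPairs sep (Dn n).
Proof.
  pose proof (Nge5 n k Hnk Hk) as H5.
  unfold Dn. constructor.
  - rewrite Forall_forall. intros T HT. destruct (inD T HT) as [i [Hi HTi]].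
    destruct (sh i Hi) as [_ [Ha [Hm [Hb [Hu Hc]]]]].
    apply sep_sym. exists (2 / INR n), 1, (-1). split; [right; lra|]. split.
    + apply (slice_top n (xs n (i-1)) (xs n i) (mm n (xs n (i-1))) (uu n (xs n (i-1)))); try assumption; try lra.
    + apply top_vals. exact H5.
  - rewrite <- Hkd. apply FOP_flat.
    + intros i Hi. destruct (sh i ltac:(lia)) as [_ [Ha [Hm [Hb [Hu Hc]]]]].
      apply (slice_FOP n (xs n (i-1)) (xs n i) (mm n (xs n (i-1))) (uu n (xs n (i-1)))); try assumption; try lra.
    + intros i j T T' Hi Hij Hj HT HT'.
      destruct (sh i ltac:(lia)) as [_ [Ha [Hm [Hb [Hu Hc]]]]].
      destruct (sh j ltac:(lia)) as [_ [Ha' [Hm' [Hb' [Hu' Hc']]]]].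
      assert (X1 : allv (fun p => xs n (i-1) <= px p <= xs n i) T)
        by (apply (slice_xr n (xs n (i-1)) (xs n i) (mm n (xs n (i-1))) (uu n (xs n (i-1)))); try assumption; try lra).
      assert (X2 : allv (fun p => xs n (j-1) <= px p <= xs n j) T')
        by (apply (slice_xr n (xs n (j-1)) (xs n j) (mm n (xs n (j-1))) (uu n (xs n (j-1)))); try assumption; try lra).
      pose proof (xs_mono n k Hnk i (j - 1) ltac:(lia) ltac:(lia)) as Mo.
      exists 1, 0, (- xs n i). split; [left; lra|].
      destruct T as [[p1 p2] p3], T' as [[q1 q2] q3]. simpl in X1, X2 |- *. unfold lin.
      repeat split; lra.
Qed.

End Main.

Ltac slice_hyp n i H :=
  let a := constr:(xs n (i-1)) in
  apply (H n a (xs n i) (mm n a) (uu n a)).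

Theorem theorem7p2 :
  exists C : R, 0 < C /\
    forall n : nat, (5 <= n)%nat -> (n mod 4 = 1)%nat ->
      exists D : list tri,
        length D = n /\
        is_dissection_of_unit_square D /\
        range D <= C / (INR n ^ 5) /\
        special_type n D.
Proof.
  exists 500. split; [lra|]. intros n H5n Hmod.
  set (k := ((n - 1) / 4)%nat).
  assert (Hnk : n = (4 * k + 1)%nat).
  { unfold k. pose proof (Nat.div_mod n 4 ltac:(lia)) as E1.
    pose proof (Nat.div_mod (n - 1) 4 ltac:(lia)) as E2.
    pose proof (Nat.mod_upper_bound (n - 1) 4 ltac:(lia)).
    assert (((n - 1) / 4)%nat = (n / 4)%nat).
    { symmetry. apply Nat.div_unique with 0%nat; lia. }
    lia. }
  assert (Hk : (1 <= k)%nat) by lia.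
  assert (Hkd : k = ((n - 1) / 4)%nat) by reflexivity.
  pose proof (Nge5 n k Hnk Hk) as H5.
  exists (Dn n). split; [|split; [|split]].
  - unfold Dn. rewrite <- Hkd. cbn [length]. rewrite len_flat. lia.
  - split; [|split].
    + intros T [<-|HT]; [apply top_nondeg; exact H5|].
      destruct (inD n k Hnk Hk Hkd T HT) as [i [Hi HTi]].
      destruct (sh n k Hnk Hk Hkd i Hi) as [_ [Ha [Hm [Hb [Hu Hc]]]]].
      revert HTi. slice_hyp n i slice_nondeg; try assumption; try lra.
    + intros i j Hi Hj Hij p. apply sep_disj.
      apply FOP_nth; auto. exact sep_sym. exact (D_sep n k Hnk Hk Hkd).
    + intros p. split.
      * intros Hp. destruct (Rle_lt_dec (top_y n (px p)) (py p)) as [Ht|Ht].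
        -- exists (top_triangle n). split; [left; reflexivity|]. apply top_cover; auto.
        -- destruct Hp as [Hx Hy].
           rewrite <- (xs_0 n k Hnk Hk), <- (xs_k n k Hnk Hk) in Hx.
           destruct (find_slice (xs n) (px p) k Hk Hx) as [i [Hi Hxi]].
           destruct (sh n k Hnk Hk Hkd i Hi) as [_ [Ha [Hm [Hb [Hu Hc]]]]].
           assert (HC : exists T, In T (sl n i) /\ in_triangle T p).
           { unfold sl. slice_hyp n i slice_cover; try assumption; try lra. }
           destruct HC as [T [HT HTp]]. exists T. split; auto.
           right. apply in_flat_map. exists i. split; auto. apply in_seq. fold k. lia.
      * intros [T [HT Hin]]. apply (tri_in_square T); auto.
        destruct HT as [<-|HT]; [apply top_sq; exact H5|].
        destruct (inD n k Hnk Hk Hkd T HT) as [i [Hi HTi]].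
        destruct (sh n k Hnk Hk Hkd i Hi) as [_ [Ha [Hm [Hb [Hu Hc]]]]].
        revert HTi. slice_hyp n i slice_sq; try assumption; try lra.
  - apply Rle_trans with (2 * (250 / INR n ^ 5)).
    + apply (range_le (Dn n) (1 / INR n)).
      * apply Rle_mult_inv_pos; [lra|]. apply pow_lt; lra.
      * intros T [<-|HT]; [apply top_area; exact H5|].
        destruct (inD n k Hnk Hk Hkd T HT) as [i [Hi HTi]].
        destruct (sh n k Hnk Hk Hkd i Hi) as [_ [Ha [Hm [Hb [Hu Hc]]]]].
        apply (slice_area_ok n (xs n (i-1)) (xs n i)); try assumption; try lra.
    + apply Req_le. field. lra.
  - exists (xs n), (fun i => mm n (xs n (i - 1))), (fun i => uu n (xs n (i - 1))).
    split; [apply (xs_0 n k Hnk Hk)|]. split; [apply (xs_k n k Hnk Hk)|].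
    split.
    + intros i Hi. destruct (sh n k Hnk Hk Hkd i Hi) as [_ [Ha [Hm [Hb [Hu Hc]]]]].
      repeat split; lra.
    + apply Permutation_refl.
Qed.
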